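(* Let $\alpha>0$, $m>-1$, $\alpha>m$, and $0<\lambda<\frac{2(\alpha-m)}{1+m}$. Consider the planar system $$\dot p=p\Big(\tfrac1\lambda(\hat r-a)+2-\lambda p\hat r-q\Big),\qquad \dot q=q(1-\lambda p\hat r-q)+bp\hat r,$$ where $\hat r=\hat r(p,q)=\dfrac{\frac{\alpha-m}{\lambda(1+\alpha)}a-q}{\frac{\alpha-m}{\lambda(1+\alpha)}+\lambda p}$. Let $\underline r=\frac12\min\{1,r_1\}$ and let $T$ be the closed triangle $\{(p,q): p\ge0,\ q\ge0,\ \hat r(p,q)\ge\underline r\}$ (equivalently $p\ge0$, $q\ge0$, $q+\lambda\underline r\,p\le\frac{\alpha-m}{\lambda(1+\alpha)}(a-\underline r)$). Then $T$ is positively invariant, and every trajectory starting in $T\setminus\{(0,0)\}$ converges to the equilibrium $(0,1)$ as $\eta\to+\infty$.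
   Context: Here $n=0$: $D=1+2\alpha-m$, $a=\frac{(2+2\alpha)(1+\lambda)}{D}$, $b=\frac{1+m}{D}+\frac{1+m}{D}\lambda$, $r_1=a-\frac{1+\alpha}{\alpha-m}\lambda>0$. This planar system is the reduced ($n=0$) slow flow of system (S) restricted to the invariant plane $s=\frac{1+m}{1+\alpha}$, where the fast variable $r$ is slaved as $r=\hat r$; the points $(0,0)$ and $(0,1)$ correspond to the equilibria $M_0=(0,0,a,\frac{1+m}{1+\alpha})$ and $M_1=(0,1,r_1,\frac{1+m}{1+\alpha})$. *)

(* Defs.v *)
From Stdlib Require Import Reals Lra.
Open Scope R_scope.

Section Sys.
Variables alpha m lambda : R.

Definition Dn : R := 1 + 2 * alpha - m.
Definition acoef : R := (2 + 2 * alpha) * (1 + lambda) / Dn.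
Definition bcoef : R := (1 + m) / Dn + (1 + m) / Dn * lambda.
Definition r1 : R := acoef - (1 + alpha) / (alpha - m) * lambda.

Definition cc : R := (alpha - m) / (lambda * (1 + alpha)).

Definition rhat (p q : R) : R := (cc * acoef - q) / (cc + lambda * p).

Definition fp (p q : R) : R :=
  p * (/ lambda * (rhat p q - acoef) + 2 - lambda * p * rhat p q - q).
Definition fq (p q : R) : R :=
  q * (1 - lambda * p * rhat p q - q) + bcoef * p * rhat p q.

Definition r_low : R := / 2 * Rmin 1 r1.

Definition inT (p q : R) : Prop := 0 <= p /\ 0 <= q /\ r_low <= rhat p q.

(* (p, q) solves the system on [0, tau): continuous from the right at 0,
   differentiable with the prescribed derivative on (0, tau), and
   continuous on [0,tau) (implied inside by differentiability). *)
Definition is_solution_on (tau : R) (p q : R -> R) : Prop :=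
  (forall eps, 0 < eps -> exists delta, 0 < delta /\
     forall t, 0 <= t < delta -> t < tau ->
       Rabs (p t - p 0) < eps /\ Rabs (q t - q 0) < eps) /\
  (forall t, 0 < t < tau ->
     derivable_pt_lim p t (fp (p t) (q t)) /\
     derivable_pt_lim q t (fq (p t) (q t))).

Definition is_global_solution (p q : R -> R) : Prop :=
  (forall eps, 0 < eps -> exists delta, 0 < delta /\
     forall t, 0 <= t < delta ->
       Rabs (p t - p 0) < eps /\ Rabs (q t - q 0) < eps) /\
  (forall t, 0 < t ->
     derivable_pt_lim p t (fp (p t) (q t)) /\
     derivable_pt_lim q t (fq (p t) (q t))).

End Sys.

Definition converges_to (p q : R -> R) (x y : R) : Prop :=
  forall eps, 0 < eps -> exists N, forall t, N <= t ->
    Rabs (p t - x) < eps /\ Rabs (q t - y) < eps.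

(* Main.v *)
Require Import Defs.
From Stdlib Require Import Reals.
From Stdlib Require Import Lra Psatz Classical.
Open Scope R_scope.

Definition RC (f: R->R) x := limit1_in f (fun t => x <= t) (f x) x.

Lemma dplus f g t a b : derivable_pt_lim f t a -> derivable_pt_lim g t b ->
  derivable_pt_lim (fun s => f s + g s) t (a + b).
Proof. intros; exact (derivable_pt_lim_plus f g t a b H H0). Qed.
Lemma dminus f g t a b : derivable_pt_lim f t a -> derivable_pt_lim g t b ->
  derivable_pt_lim (fun s => f s - g s) t (a - b).
Proof. intros; exact (derivable_pt_lim_minus f g t a b H H0). Qed.
Lemma dmult f g t a b : derivable_pt_lim f t a -> derivable_pt_lim g t b ->
  derivable_pt_lim (fun s => f s * g s) t (a * g t + f t * b).
Proof. intros; exact (derivable_pt_lim_mult f g t a b H H0). Qed.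
Lemma dconst k t : derivable_pt_lim (fun _ => k) t 0.
Proof. exact (derivable_pt_lim_const k t). Qed.
Lemma did t : derivable_pt_lim (fun s => s) t 1.
Proof. exact (derivable_pt_lim_id t). Qed.
Lemma ddiv f g t a b : derivable_pt_lim f t a -> derivable_pt_lim g t b -> g t <> 0 ->
  derivable_pt_lim (fun s => f s / g s) t ((a * g t - b * f t) / (g t)²).
Proof. intros; exact (derivable_pt_lim_div f g t a b H H0 H1). Qed.
Lemma dext f t a b : derivable_pt_lim f t a -> a = b -> derivable_pt_lim f t b.
Proof. intros H ->; exact H. Qed.
Lemma dexplin k t : derivable_pt_lim (fun s => exp (k*s)) t (k * exp (k*t)).
Proof.
  assert (H : derivable_pt_lim (fun s => k*s) t (0 * t + k * 1)) by (apply dmult; [apply dconst|apply did]).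
  pose proof (derivable_pt_lim_comp (fun s => k*s) exp t _ _ H (derivable_pt_lim_exp (k*t))) as H2.
  unfold comp in H2. eapply dext; [exact H2| ring].
Qed.

Lemma lim_of_der f x l D : derivable_pt_lim f x l -> limit1_in f D (f x) x.
Proof.
  intros Hd. assert (Hc : continuity_pt f x) by (apply derivable_continuous_pt; exists l; exact Hd).
  intros eps Heps. destruct (Hc eps Heps) as [alp [Ha H]]. exists alp; split; auto.
  intros t [Dt Ht]. destruct (Req_dec t x) as [->|Hne].
  - simpl. unfold R_dist. rewrite Rminus_diag, Rabs_R0. lra.
  - apply H. split; [split; [exact I| auto] | exact Ht].
Qed.

Lemma lim_const k D x : limit1_in (fun _ => k) D k x.
Proof. exact (limit_free (fun _ => k) D x x). Qed.

Lemma L_mono f f' x y : x < y -> RC f x ->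
  (forall t, x < t <= y -> derivable_pt_lim f t (f' t)) ->
  (forall t, x < t < y -> 0 <= f' t) -> f x <= f y.
Proof.
  intros Hxy Hrc Hd Hpos. destruct (Rle_or_lt (f x) (f y)) as [H|H]; [exact H|].
  exfalso. destruct (Hrc (f x - f y)) as [alp [Ha Hal]]; [lra|].
  set (t := x + Rmin alp (y - x) / 2).
  assert (Hm1 : Rmin alp (y-x) <= alp) by apply Rmin_l.
  assert (Hm2 : Rmin alp (y-x) <= y - x) by apply Rmin_r.
  assert (Hm3 : 0 < Rmin alp (y-x)) by (apply Rmin_pos; lra).
  assert (Ht1 : x < t < y) by (unfold t; lra).
  assert (Hft : R_dist (f t) (f x) < f x - f y).
  { apply (Hal t). split. unfold t; lra. simpl. unfold R_dist. rewrite Rabs_right; unfold t; lra. }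
  unfold R_dist in Hft.
  destruct (MVT_cor2 f f' t y) as [c [Hc1 Hc2]]; [lra| |].
  { intros c Hc. apply Hd. lra. }
  assert (0 <= f' c) by (apply Hpos; lra).
  assert (0 <= f' c * (y - t)) by (apply Rmult_le_pos; lra).
  apply Rabs_def2 in Hft. lra.
Qed.

Lemma RC_of_der f x l : derivable_pt_lim f x l -> RC f x.
Proof. intros; unfold RC; eapply lim_of_der; eauto. Qed.

Lemma L5 h h' k x y : x < y -> RC h x ->
  (forall t, x < t <= y -> derivable_pt_lim h t (h' t)) ->
  (forall t, x < t < y -> k * h t <= h' t) -> h x * exp (k*(y-x)) <= h y.
Proof.
  intros Hxy Hrc Hd Hk.
  set (g := fun t => exp (-k*t) * h t).
  assert (Hg : g x <= g y).
  { apply (L_mono g (fun t => (-k * exp (-k*t)) * h t + exp (-k*t) * h' t)); auto.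
    - unfold RC, g. apply limit_mul; [|exact Hrc]. apply (lim_of_der (fun s => exp (-k*s)) x (-k * exp(-k*x))). apply dexplin.
    - intros t Ht. unfold g. apply (dmult (fun s => exp (-k*s)) h); [apply (dexplin (-k))| apply Hd; auto].
    - intros t Ht. assert (0 < exp (-k*t)) by apply exp_pos.
      specialize (Hk t Ht). nra. }
  unfold g in Hg.
  assert (E1 : exp (k*(y-x)) = exp (k*y) * exp (-k*x)) by (rewrite <- exp_plus; f_equal; ring).
  assert (E2 : exp (k*y) * exp (-k*y) = 1) by (rewrite <- exp_plus; replace (k*y + -k*y) with 0 by ring; apply exp_0).
  assert (0 < exp (k*y)) by apply exp_pos.
  rewrite E1.
  replace (h y) with (exp (k*y) * (exp (-k*y) * h y)) by (rewrite <- Rmult_assoc, E2; ring).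
  replace (h x * (exp (k * y) * exp (- k * x))) with (exp (k*y) * (exp (-k*x) * h x)) by ring.
  apply Rmult_le_compat_l; lra.
Qed.

Lemma NoNeg h h' M x y : RC h x ->
  (forall t, x < t <= y -> derivable_pt_lim h t (h' t)) -> 0 <= h x ->
  (forall t, x < t < y -> h t < 0 -> M * h t <= h' t) ->
  forall t, x <= t <= y -> 0 <= h t.
Proof.
  intros Hrc Hd H0 HM t Ht.
  destruct (Rle_or_lt 0 (h t)) as [Hp|Hn]; [exact Hp|]. exfalso.
  assert (Htx : x < t) by (destruct (Req_dec x t) as [->|]; [lra|lra]).
  set (S := fun s => x <= s <= t /\ 0 <= h s).
  destruct (completeness S) as [t0 [Hub Hlub]].
  { exists t. intros s [Hs _]. lra. }
  { exists x. split; [lra|exact H0]. }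
  assert (Hx0 : x <= t0) by (apply Hub; split; [lra|exact H0]).
  assert (Ht0 : t0 <= t) by (apply Hlub; intros s [Hs _]; lra).
  assert (HA : forall s, t0 < s <= t -> h s < 0).
  { intros s Hs. destruct (Rle_or_lt 0 (h s)) as [Hq|Hq]; [|exact Hq].
    assert (s <= t0) by (apply Hub; split; [lra|exact Hq]). lra. }
  assert (HB : 0 <= h t0).
  { destruct (Req_dec t0 x) as [->|Hne]; [exact H0|].
    destruct (Rle_or_lt 0 (h t0)) as [Hq|Hq]; [exact Hq|]. exfalso.
    assert (Hl : limit1_in h (fun _ => True) (h t0) t0) by (eapply lim_of_der; apply Hd; lra).
    destruct (Hl (- h t0)) as [alp [Ha Hal]]; [lra|].
    assert (t0 <= t0 - alp); [|lra].
    apply Hlub. intros s [Hs1 Hs2].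
    destruct (Rle_or_lt s (t0 - alp)) as [Hr|Hr]; [exact Hr|]. exfalso.
    assert (s <= t0) by (apply Hub; split; assumption).
    assert (Hd2 : R_dist (h s) (h t0) < - h t0).
    { apply Hal. split; [exact I|]. simpl. unfold R_dist. apply Rabs_def1; lra. }
    unfold R_dist in Hd2. apply Rabs_def2 in Hd2. lra. }
  assert (Hlt : t0 < t) by (destruct (Req_dec t0 t) as [->|]; lra).
  assert (Hrc0 : RC h t0).
  { destruct (Req_dec t0 x) as [->|Hne]; [exact Hrc|]. eapply RC_of_der. apply Hd; lra. }
  pose proof (L5 h h' M t0 t Hlt Hrc0) as HL.
  assert (HL2 : h t0 * exp (M * (t - t0)) <= h t).
  { apply HL. intros u Hu; apply Hd; lra. intros u Hu. apply HM; [lra|]. apply HA; lra. }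
  assert (0 < exp (M * (t - t0))) by apply exp_pos. nra.
Qed.

Lemma CL f x L : 0 < x -> limit1_in f (fun _ => True) (f x) x ->
  (forall u, 0 <= u < x -> L <= f u) -> L <= f x.
Proof.
  intros Hx Hl Hu. destruct (Rle_or_lt L (f x)) as [H|H]; [exact H|]. exfalso.
  destruct (Hl (L - f x)) as [alp [Ha Hal]]; [lra|].
  set (u := x - Rmin alp x / 2).
  assert (0 < Rmin alp x) by (apply Rmin_pos; lra).
  assert (Rmin alp x <= alp) by apply Rmin_l. assert (Rmin alp x <= x) by apply Rmin_r.
  assert (Hd : R_dist (f u) (f x) < L - f x).
  { apply Hal. split; [exact I|]. simpl. unfold R_dist, u. apply Rabs_def1; lra. }
  unfold R_dist in Hd. apply Rabs_def2 in Hd.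
  assert (L <= f u) by (apply Hu; unfold u; lra). lra.
Qed.

Lemma Stay V V' eps s : 0 < s -> (forall t, 0 < t -> derivable_pt_lim V t (V' t)) ->
  V s <= eps -> (forall t, s <= t -> eps < V t -> V' t <= 0) -> forall t, s <= t -> V t <= eps.
Proof.
  intros Hs Hd Hv HV t Ht.
  assert (Hdh : forall u, 0 < u -> derivable_pt_lim (fun z => eps - V z) u (0 - V' u))
    by (intros; apply dminus; [apply dconst|apply Hd; auto]).
  assert (0 <= eps - V t); [|lra].
  apply (NoNeg (fun z => eps - V z) (fun z => 0 - V' z) 0 s t).
  - eapply RC_of_der. apply Hdh; lra.
  - intros u Hu. apply Hdh; lra.
  - lra.
  - intros u Hu Hneg. assert (V' u <= 0) by (apply HV; lra). lra.
  - lra.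
Qed.

Lemma Reach V V' eps d T : 0 < T -> 0 < d -> (forall t, 0 < t -> derivable_pt_lim V t (V' t)) ->
  (forall t, T <= t -> 0 <= V t) -> (forall t, T <= t -> eps < V t -> V' t <= - d) ->
  exists T', 0 < T' /\ forall t, T' <= t -> V t <= eps.
Proof.
  intros HT Hd HD H0 HV.
  set (L := V T / d + 1).
  assert (HL : 0 < L) by (unfold L; assert (0 <= V T / d) by (unfold Rdiv; apply Rmult_le_pos; [apply H0; lra|left; apply Rinv_0_lt_compat; lra]); lra).
  destruct (classic (exists s, T <= s <= T + L /\ V s <= eps)) as [[s [Hs1 Hs2]]|Hno].
  - exists s. split; [lra|]. apply (Stay V V'); auto; try lra.
    intros t Ht Hlt. assert (V' t <= -d) by (apply HV; lra). lra.
  - exfalso.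
    assert (Hall : forall s, T <= s <= T + L -> eps < V s).
    { intros s Hs. destruct (Rle_or_lt (V s) eps) as [H|H]; [|exact H]. exfalso. apply Hno; eauto. }
    assert (Hdw : forall u, 0 < u -> derivable_pt_lim (fun z => - V z - d * z) u (- V' u - (0 * u + d * 1))).
    { intros u Hu. apply dminus. apply (derivable_pt_lim_opp V u (V' u)). apply HD; auto.
      apply (dmult (fun _ => d) (fun z => z)); [apply dconst|apply did]. }
    pose proof (L5 (fun z => - V z - d * z) (fun u => - V' u - (0 * u + d * 1)) 0 T (T + L)) as HL5.
    assert (Hr : (- V T - d * T) * exp (0 * (T + L - T)) <= - V (T + L) - d * (T + L)).
    { apply HL5. lra. eapply RC_of_der. apply Hdw; lra.
      intros u Hu; apply Hdw; lra.
      intros u Hu. assert (V' u <= -d). { apply HV. lra. apply Hall. lra. } lra. }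
    replace (0 * (T + L - T)) with 0 in Hr by ring. rewrite exp_0 in Hr.
    assert (0 <= V (T + L)) by (apply H0; lra).
    assert (d * L = V T + d) by (unfold L; field; apply Rgt_not_eq; lra). rewrite Rmult_1_r in Hr. lra.
Qed.


Definition Hyps al m la := 0 < al /\ -1 < m /\ m < al /\ 0 < la /\ la < 2*(al-m)/(1+m).


Lemma c_Dn al m la : Hyps al m la -> 0 < Dn al m.
Proof. intros (H1&H2&H3&H4&H5). unfold Dn. lra. Qed.
Lemma c_cc al m la : Hyps al m la -> 0 < cc al m la.
Proof. intros (H1&H2&H3&H4&H5). unfold cc. apply Rdiv_lt_0_compat; nra. Qed.
Lemma c_k al m la : Hyps al m la -> cc al m la * la = (al - m)/(1+al).
Proof. intros (H1&H2&H3&H4&H5). unfold cc. field. lra. Qed.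
Lemma c_k1 al m la : Hyps al m la -> 0 < cc al m la * la < 1.
Proof. intros H. rewrite (c_k _ _ _ H). destruct H as (H1&H2&H3&H4&H5). split.
  apply Rdiv_lt_0_compat; lra. apply (Rmult_lt_reg_r (1+al)); [lra|]. unfold Rdiv.
  rewrite Rmult_assoc, Rinv_l; lra. Qed.
Lemma c_a al m la : Hyps al m la -> acoef al m la = 1 + la + bcoef al m la.
Proof. intros H. pose proof (c_Dn _ _ _ H). unfold acoef, bcoef. unfold Dn in *. field. lra. Qed.
Lemma c_b al m la : Hyps al m la -> 0 < bcoef al m la.
Proof. intros H. pose proof (c_Dn _ _ _ H). destruct H as (H1&H2&H3&H4&H5). unfold bcoef.
  assert (0 < (1+m)/Dn al m) by (apply Rdiv_lt_0_compat; lra). nra. Qed.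
Lemma c_r1 al m la : Hyps al m la -> r1 al m la = acoef al m la - / cc al m la.
Proof. intros H. destruct H as (H1&H2&H3&H4&H5). unfold r1, cc. field. repeat split; lra. Qed.
Lemma c_r1pos al m la : Hyps al m la -> 0 < r1 al m la.
Proof. intros H. pose proof (c_Dn _ _ _ H). destruct H as (H1&H2&H3&H4&H5).
  assert (E : r1 al m la * (Dn al m * (al - m)) = (1+al)*(2*(al-m) - la*(1+m))).
  { unfold r1, acoef. unfold Dn in *. field. lra. }
  assert (la * (1+m) < 2*(al-m)).
  { apply (Rmult_lt_compat_r (1+m)) in H5; [|lra]. unfold Rdiv in H5. rewrite Rmult_assoc, Rinv_l in H5; lra. }
  assert (0 < Dn al m * (al - m)) by nra.
  assert (0 < (1+al)*(2*(al-m) - la*(1+m))) by nra. nra. Qed.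
Lemma c_apos al m la : Hyps al m la -> 0 < acoef al m la.
Proof. intros H. rewrite (c_a _ _ _ H). pose proof (c_b _ _ _ H). destruct H as (H1&H2&H3&H4&H5). lra. Qed.

Definition rcr al m la := acoef al m la - 2*la/(1 + cc al m la * la).
Definition Kc al m la := (1 + cc al m la * la)/la.

Lemma c_rcr1 al m la : Hyps al m la -> 1 < rcr al m la.
Proof. intros H. pose proof (c_Dn _ _ _ H). pose proof (c_k _ _ _ H) as Ek.
  assert (E : rcr al m la - 1 = (1+m)/Dn al m).
  { unfold rcr. rewrite Ek. unfold acoef, Dn in *. destruct H as (H1&H2&H3&H4&H5). field. split; lra. }
  destruct H as (H1&H2&H3&H4&H5). assert (0 < (1+m)/Dn al m) by (apply Rdiv_lt_0_compat; lra). lra. Qed.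
Lemma c_rcr2 al m la : Hyps al m la -> r1 al m la < rcr al m la.
Proof. intros H. pose proof (c_k1 _ _ _ H). pose proof (c_cc _ _ _ H). rewrite (c_r1 _ _ _ H).
  assert (E : (rcr al m la - (acoef al m la - / cc al m la)) * (cc al m la * (1 + cc al m la * la)) = 1 - cc al m la * la).
  { unfold rcr. field. lra. }
  assert (0 < cc al m la * (1 + cc al m la * la)) by nra. nra. Qed.
Lemma c_rcr3 al m la : Hyps al m la -> rcr al m la < acoef al m la.
Proof. intros H. pose proof (c_k1 _ _ _ H). destruct H as (H1&H2&H3&H4&H5). unfold rcr.
  assert (0 < 2*la/(1 + cc al m la * la)) by (apply Rdiv_lt_0_compat; lra). lra. Qed.
Lemma c_K al m la : Hyps al m la -> 0 < Kc al m la.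
Proof. intros H. pose proof (c_k1 _ _ _ H). destruct H as (H1&H2&H3&H4&H5). unfold Kc. apply Rdiv_lt_0_compat; lra. Qed.

Definition RD al m la P Q := let R := rhat al m la P Q in
  (cc al m la ^2 * (acoef al m la - R) * (r1 al m la - R) + P * R * (1 - R)) / (cc al m la + la * P).

Lemma fp_id al m la P Q : Hyps al m la -> cc al m la + la * P <> 0 ->
  fp al m la P Q = P * Kc al m la * (rhat al m la P Q - rcr al m la).
Proof. intros H Hn. pose proof (c_k1 _ _ _ H). destruct H as (H1&H2&H3&H4&H5).
  unfold fp, Kc, rcr, rhat. field. repeat split; lra. Qed.

Lemma q_id al m la P Q : cc al m la + la * P <> 0 ->
  Q = cc al m la * acoef al m la - rhat al m la P Q * (cc al m la + la * P).
Proof. intros Hn. unfold rhat. field. exact Hn. Qed.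

Lemma der_r al m la p q t : Hyps al m la ->
  derivable_pt_lim p t (fp al m la (p t) (q t)) -> derivable_pt_lim q t (fq al m la (p t) (q t)) ->
  cc al m la + la * p t <> 0 ->
  derivable_pt_lim (fun s => rhat al m la (p s) (q s)) t (RD al m la (p t) (q t)).
Proof.
  intros H Hp Hq Hn. unfold rhat at 1.
  eapply dext.
  - apply (ddiv (fun s => cc al m la * acoef al m la - q s) (fun s => cc al m la + la * p s)).
    + apply dminus; [apply dconst|exact Hq].
    + apply dplus; [apply dconst|]. apply (dmult (fun _ => la) p); [apply dconst|exact Hp].
    + exact Hn.
  - pose proof (c_cc _ _ _ H). pose proof (c_r1 _ _ _ H) as Er. pose proof (c_a _ _ _ H) as Ea.
    unfold RD, fp, fq. rewrite Er. unfold rhat. rewrite Ea. unfold Rsqr.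
    destruct H as (H1&H2&H3&H4&H5). field. repeat split; lra.
Qed.

Lemma LR al m la p q D x : limit1_in p D (p x) x -> limit1_in q D (q x) x ->
  cc al m la + la * p x <> 0 ->
  limit1_in (fun t => rhat al m la (p t) (q t)) D (rhat al m la (p x) (q x)) x.
Proof.
  intros Hp Hq Hn. unfold rhat, Rdiv.
  apply (limit_mul (fun t => cc al m la * acoef al m la - q t) (fun t => / (cc al m la + la * p t))).
  - apply (limit_minus (fun _ => cc al m la * acoef al m la) q). apply lim_const. exact Hq.
  - apply (limit_inv (fun t => cc al m la + la * p t)); [|exact Hn].
    apply (limit_plus (fun _ => cc al m la) (fun t => la * p t)). apply lim_const.
    apply (limit_mul (fun _ => la) p). apply lim_const. exact Hp.
Qed.

Lemma rl_facts al m la : Hyps al m la ->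
  0 < r_low al m la /\ 2 * r_low al m la <= 1 /\ 2 * r_low al m la <= r1 al m la.
Proof. intros H. pose proof (c_r1pos _ _ _ H). unfold r_low.
  assert (Rmin 1 (r1 al m la) <= 1) by apply Rmin_l. assert (Rmin 1 (r1 al m la) <= r1 al m la) by apply Rmin_r.
  assert (0 < Rmin 1 (r1 al m la)) by (apply Rmin_pos; lra). lra. Qed.

Definition Pmax al m la := cc al m la * acoef al m la / (la * r_low al m la).

Lemma Tfacts al m la P Q : Hyps al m la -> inT al m la P Q ->
  0 <= P /\ 0 <= Q /\ r_low al m la <= rhat al m la P Q /\ rhat al m la P Q <= acoef al m la /\
  P <= Pmax al m la /\ cc al m la <= cc al m la + la * P.
Proof.
  intros H (HP&HQ&HR). pose proof (rl_facts _ _ _ H) as (L1&L2&L3). pose proof (c_cc _ _ _ H).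
  pose proof (c_apos _ _ _ H). pose proof H as (G1&G2&G3&G4&G5).
  assert (Hc : cc al m la <= cc al m la + la * P) by nra.
  pose proof (q_id al m la P Q ltac:(lra)) as E.
  set (R := rhat al m la P Q) in *. set (c := cc al m la) in *. set (a := acoef al m la) in *.
  assert (R <= a) by nra.
  assert (la * P * r_low al m la <= c * a) by nra.
  repeat split; auto.
  unfold Pmax. fold c a. apply (Rmult_le_reg_r (la * r_low al m la)); [nra|].
  unfold Rdiv. rewrite Rmult_assoc, Rinv_l; nra.
Qed.

Definition Gf al m la P Q := / la * (rhat al m la P Q - acoef al m la) + 2 - la * P * rhat al m la P Q - Q.
Definition G2f al m la P Q := 1 - la * P * rhat al m la P Q - Q.
Lemma fp_G al m la P Q : fp al m la P Q = P * Gf al m la P Q.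
Proof. reflexivity. Qed.
Lemma fq_G al m la P Q : fq al m la P Q = Q * G2f al m la P Q + bcoef al m la * P * rhat al m la P Q.
Proof. reflexivity. Qed.

Lemma r1_lt_a al m la : Hyps al m la -> r1 al m la < acoef al m la.
Proof. intros H. rewrite (c_r1 _ _ _ H). pose proof (c_cc _ _ _ H).
  assert (0 < / cc al m la) by (apply Rinv_0_lt_compat; lra). lra. Qed.

Lemma RD_nonneg al m la P Q : Hyps al m la -> 0 <= P -> 0 < rhat al m la P Q -> rhat al m la P Q <= 1 ->
  rhat al m la P Q <= r1 al m la -> 0 <= RD al m la P Q.
Proof.
  intros H HP H1 H2 H3. pose proof (r1_lt_a _ _ _ H). pose proof (c_cc _ _ _ H). pose proof H as (G1&G2&G3&G4&G5).
  unfold RD. set (R := rhat al m la P Q) in *. apply Rmult_le_pos.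
  - assert (0 <= cc al m la ^ 2 * (acoef al m la - R) * (r1 al m la - R)).
    { apply Rmult_le_pos; [apply Rmult_le_pos|]; try lra. apply pow_le; lra. }
    assert (0 <= P * R * (1 - R)) by (apply Rmult_le_pos; [apply Rmult_le_pos|]; lra). lra.
  - left. apply Rinv_0_lt_compat. nra.
Qed.

Lemma Loc al m la p q x tau : Hyps al m la -> x < tau ->
  (forall t, x < t < tau -> derivable_pt_lim p t (fp al m la (p t) (q t)) /\
                            derivable_pt_lim q t (fq al m la (p t) (q t))) ->
  RC p x -> RC q x -> inT al m la (p x) (q x) ->
  exists d, 0 < d /\ forall u, x <= u < x + d -> u < tau -> inT al m la (p u) (q u).
Proof.
  intros H Hxt Hd Hp Hq HT.
  destruct (Tfacts _ _ _ _ _ H HT) as (P0&Q0&R0&Ra&Pm&Cc).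
  pose proof (rl_facts _ _ _ H) as (L1&L2&L3). pose proof (c_cc _ _ _ H) as Hc.
  pose proof (c_b _ _ _ H) as Hb. pose proof (r1_lt_a _ _ _ H) as Hr1a.
  pose proof H as (G1&G2&G3&G4&G5).
  assert (Hn : cc al m la + la * p x <> 0) by lra.
  assert (Hrr : limit1_in (fun s => rhat al m la (p s) (q s)) (fun t => x <= t) (rhat al m la (p x) (q x)) x)
    by (apply LR; assumption).
  assert (HG : limit1_in (fun s => Gf al m la (p s) (q s)) (fun t => x <= t) (Gf al m la (p x) (q x)) x).
  { unfold Gf.
    apply (limit_minus (fun s => /la*(rhat al m la (p s) (q s) - acoef al m la) + 2 - la*p s*rhat al m la (p s) (q s)) q); [|exact Hq].
    apply (limit_minus (fun s => /la*(rhat al m la (p s) (q s) - acoef al m la) + 2) (fun s => la*p s*rhat al m la (p s) (q s))).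
    - apply (limit_plus (fun s => /la*(rhat al m la (p s) (q s) - acoef al m la)) (fun _ => 2)); [|apply lim_const].
      apply (limit_mul (fun _ => /la) (fun s => rhat al m la (p s) (q s) - acoef al m la)); [apply lim_const|].
      apply (limit_minus (fun s => rhat al m la (p s) (q s)) (fun _ => acoef al m la)); [exact Hrr|apply lim_const].
    - apply (limit_mul (fun s => la * p s) (fun s => rhat al m la (p s) (q s))); [|exact Hrr].
      apply (limit_mul (fun _ => la) p); [apply lim_const|exact Hp]. }
  assert (HG2 : limit1_in (fun s => G2f al m la (p s) (q s)) (fun t => x <= t) (G2f al m la (p x) (q x)) x).
  { unfold G2f.
    apply (limit_minus (fun s => 1 - la*p s*rhat al m la (p s) (q s)) q); [|exact Hq].
    apply (limit_minus (fun _ => 1) (fun s => la*p s*rhat al m la (p s) (q s))); [apply lim_const|].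
    apply (limit_mul (fun s => la * p s) (fun s => rhat al m la (p s) (q s))); [|exact Hrr].
    apply (limit_mul (fun _ => la) p); [apply lim_const|exact Hp]. }
  destruct (Hp (cc al m la / (2 * la))) as [d1 [Hd1 E1]]. { apply Rdiv_lt_0_compat; lra. }
  destruct (HG 1) as [d2 [Hd2 E2]]; [lra|].
  destruct (HG2 1) as [d3 [Hd3 E3]]; [lra|].
  destruct (Hrr (r_low al m la)) as [d4 [Hd4 E4]]; [lra|].
  set (d := Rmin (Rmin d1 d2) (Rmin (Rmin d3 d4) (tau - x))).
  assert (Hdpos : 0 < d) by (unfold d; repeat apply Rmin_pos; lra).
  assert (Hdd : d <= d1 /\ d <= d2 /\ d <= d3 /\ d <= d4 /\ d <= tau - x).
  { unfold d. pose proof (Rmin_l (Rmin d1 d2) (Rmin (Rmin d3 d4) (tau - x))).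
    pose proof (Rmin_r (Rmin d1 d2) (Rmin (Rmin d3 d4) (tau - x))).
    pose proof (Rmin_l d1 d2). pose proof (Rmin_r d1 d2). pose proof (Rmin_l (Rmin d3 d4) (tau - x)).
    pose proof (Rmin_r (Rmin d3 d4) (tau - x)). pose proof (Rmin_l d3 d4). pose proof (Rmin_r d3 d4). lra. }
  clearbody d.
  assert (B : forall s, x <= s < x + d ->
     cc al m la / 2 < cc al m la + la * p s /\ Gf al m la (p s) (q s) < Gf al m la (p x) (q x) + 1 /\
     G2f al m la (p s) (q s) < G2f al m la (p x) (q x) + 1 /\
     0 < rhat al m la (p s) (q s) /\ rhat al m la (p s) (q s) < rhat al m la (p x) (q x) + r_low al m la).
  { intros s Hs.
    assert (Dk : forall dk, d <= dk -> dist R_met s x < dk) by (intros; simpl; unfold R_dist; rewrite Rabs_right; lra).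
    pose proof (E1 s (conj (proj1 Hs) (Dk d1 ltac:(lra)))) as F1.
    pose proof (E2 s (conj (proj1 Hs) (Dk d2 ltac:(lra)))) as F2.
    pose proof (E3 s (conj (proj1 Hs) (Dk d3 ltac:(lra)))) as F3.
    pose proof (E4 s (conj (proj1 Hs) (Dk d4 ltac:(lra)))) as F4.
    simpl in F1, F2, F3, F4. unfold R_dist in F1, F2, F3, F4.
    apply Rabs_def2 in F1. apply Rabs_def2 in F2. apply Rabs_def2 in F3. apply Rabs_def2 in F4.
    assert (la * (cc al m la / (2 * la)) = cc al m la / 2) by (field; lra).
    repeat split; try lra. nra. }
  exists d. split; [exact Hdpos|]. intros u Hu Hut.
  destruct (Req_dec u x) as [->|Hux]; [exact HT|].
  assert (Hxu : x < u) by lra.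
  assert (Hder : forall s, x < s <= u -> derivable_pt_lim p s (fp al m la (p s) (q s)) /\ derivable_pt_lim q s (fq al m la (p s) (q s))) by (intros; apply Hd; lra).
  assert (Hpn : forall s, x <= s <= u -> 0 <= p s).
  { apply (NoNeg p (fun s => fp al m la (p s) (q s)) (Gf al m la (p x) (q x) + 1) x u Hp).
    - intros s Hs; apply Hder; auto.
    - exact P0.
    - intros s Hs Hneg. rewrite fp_G. destruct (B s ltac:(lra)) as (_&Bg&_). nra. }
  assert (Hqn : forall s, x <= s <= u -> 0 <= q s).
  { apply (NoNeg q (fun s => fq al m la (p s) (q s)) (G2f al m la (p x) (q x) + 1) x u Hq).
    - intros s Hs; apply Hder; auto.
    - exact Q0.
    - intros s Hs Hneg. rewrite fq_G. destruct (B s ltac:(lra)) as (_&_&Bg&Br&_).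
      assert (0 <= p s) by (apply Hpn; lra).
      assert (0 <= bcoef al m la * p s * rhat al m la (p s) (q s)) by (apply Rmult_le_pos; [apply Rmult_le_pos|]; lra).
      nra. }
  assert (Hrn : forall s, x <= s <= u -> 0 <= rhat al m la (p s) (q s) - r_low al m la).
  { apply (NoNeg (fun s => rhat al m la (p s) (q s) - r_low al m la) (fun s => RD al m la (p s) (q s) - 0) 0 x u).
    - unfold RC. apply (limit_minus (fun s => rhat al m la (p s) (q s)) (fun _ => r_low al m la)); [exact Hrr|apply lim_const].
    - intros s Hs. apply dminus; [|apply dconst]. destruct (B s ltac:(lra)) as (Bc&_).
      apply der_r; try apply Hder; auto; lra.
    - lra.
    - intros s Hs Hneg. destruct (B s ltac:(lra)) as (Bc&_&_&Br&Br2).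
      assert (0 <= p s) by (apply Hpn; lra).
      assert (0 <= RD al m la (p s) (q s)) by (apply RD_nonneg; auto; lra). lra. }
  split; [apply Hpn; lra|]. split; [apply Hqn; lra|]. assert (0 <= rhat al m la (p u) (q u) - r_low al m la) by (apply Hrn; lra). lra.
Qed.

Lemma part1 al m la : Hyps al m la -> forall (tau : R) (p q : R -> R),
  is_solution_on al m la tau p q -> inT al m la (p 0) (q 0) ->
  forall t, 0 <= t < tau -> inT al m la (p t) (q t).
Proof.
  intros H tau p q [Hic Hder] H0 t Ht.
  destruct (classic (inT al m la (p t) (q t))) as [ok|Hno]; [exact ok|]. exfalso.
  set (S := fun s => 0 <= s <= t /\ forall u, 0 <= u <= s -> inT al m la (p u) (q u)).
  destruct (completeness S) as [ts [Hub Hlub]].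
  { exists t. intros s [Hs _]. lra. }
  { exists 0. split; [lra|]. intros u Hu. replace u with 0 by lra. exact H0. }
  assert (Hts0 : 0 <= ts) by (apply Hub; split; [lra|]; intros u Hu; replace u with 0 by lra; exact H0).
  assert (Htst : ts <= t) by (apply Hlub; intros s [Hs _]; lra).
  assert (Hbef : forall u, 0 <= u < ts -> inT al m la (p u) (q u)).
  { intros u Hu. destruct (classic (exists s, S s /\ u < s)) as [[s [[Hs1 Hs2] Hs3]]|Hn].
    - apply Hs2; lra.
    - exfalso. assert (ts <= u); [|lra]. apply Hlub. intros s Hs.
      destruct (Rle_or_lt s u) as [Hl|Hl]; [exact Hl|]. exfalso; apply Hn; eauto. }
  assert (Hrc : RC p ts /\ RC q ts).
  { destruct (Req_dec ts 0) as [E|Hne].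
    - rewrite E. split; intros eps Heps; destruct (Hic eps Heps) as [dl [Hdl Hdl2]];
        exists (Rmin dl tau); (split; [apply Rmin_pos; lra|]);
        intros s [Hs1 Hs2]; simpl in *; unfold R_dist in *;
        rewrite Rminus_0_r, Rabs_right in Hs2 by lra;
        assert (Rmin dl tau <= dl) by apply Rmin_l; assert (Rmin dl tau <= tau) by apply Rmin_r;
        apply Hdl2; lra.
    - split; eapply RC_of_der; apply Hder; lra. }
  assert (HTs : inT al m la (p ts) (q ts)).
  { destruct (Req_dec ts 0) as [E|Hne]; [rewrite E; exact H0|].
    assert (Hp : limit1_in p (fun _ => True) (p ts) ts) by (eapply lim_of_der; apply Hder; lra).
    assert (Hq : limit1_in q (fun _ => True) (q ts) ts) by (eapply lim_of_der; apply Hder; lra).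
    assert (Pp : 0 <= p ts).
    { apply (CL p ts 0); [lra|exact Hp|]. intros u Hu. apply (Tfacts _ _ _ _ _ H (Hbef u Hu)). }
    assert (Qp : 0 <= q ts).
    { apply (CL q ts 0); [lra|exact Hq|]. intros u Hu. apply (Tfacts _ _ _ _ _ H (Hbef u Hu)). }
    split; [exact Pp|]. split; [exact Qp|].
    apply (CL (fun s => rhat al m la (p s) (q s)) ts); [lra| |].
    - apply LR; auto. pose proof (c_cc _ _ _ H). destruct H as (G1&G2&G3&G4&G5). nra.
    - intros u Hu. apply (Tfacts _ _ _ _ _ H (Hbef u Hu)). }
  assert (Htslt : ts < t) by (destruct (Req_dec ts t) as [E|]; [rewrite E in HTs; contradiction|lra]).
  destruct (Loc al m la p q ts tau H ltac:(lra)) as [d [Hd HL]].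
  { intros s Hs. apply Hder. lra. }
  { apply Hrc. } { apply Hrc. } { exact HTs. }
  set (s := Rmin (ts + d/2) t).
  assert (s <= ts + d/2) by apply Rmin_l. assert (s <= t) by apply Rmin_r.
  assert (ts < s) by (unfold s; apply Rmin_glb_lt; lra).
  assert (s <= ts); [|lra].
  apply Hub. split; [lra|]. intros u Hu.
  destruct (Rlt_or_le u ts) as [Hl|Hl]; [apply Hbef; lra|]. apply HL; lra.
Qed.

Lemma RD_nonpos al m la P Q : Hyps al m la -> 0 <= P -> 1 <= rhat al m la P Q ->
  r1 al m la <= rhat al m la P Q -> rhat al m la P Q <= acoef al m la -> RD al m la P Q <= 0.
Proof.
  intros H HP H1 H2 H3. pose proof (c_cc _ _ _ H). pose proof H as (G1&G2&G3&G4&G5).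
  unfold RD. set (R := rhat al m la P Q) in *. set (c := cc al m la) in *.
  assert (0 <= c ^ 2 * (acoef al m la - R) * (R - r1 al m la)).
  { apply Rmult_le_pos; [apply Rmult_le_pos|]; try lra. apply pow_le; lra. }
  assert (0 <= P * R * (R - 1)) by (apply Rmult_le_pos; [apply Rmult_le_pos|]; lra).
  assert (0 < / (c + la * P)) by (apply Rinv_0_lt_compat; nra).
  unfold Rdiv. assert (0 <= - (c ^ 2 * (acoef al m la - R) * (r1 al m la - R) + P * R * (1 - R)) * / (c + la * P)).
  { apply Rmult_le_pos; lra. } lra.
Qed.

Lemma div_le_den N d D : 0 <= N -> 0 < d -> d <= D -> N / D <= N / d.
Proof. intros. unfold Rdiv. apply Rmult_le_compat_l; auto. apply Rinv_le_contravar; lra. Qed.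

Lemma RD_upper al m la P Q rp : Hyps al m la -> 0 <= P -> P <= Pmax al m la -> 1 <= rp ->
  r1 al m la < rp -> rp <= rhat al m la P Q -> rhat al m la P Q <= acoef al m la ->
  cc al m la ^ 2 * (rp - r1 al m la) / (cc al m la + la * Pmax al m la) * (acoef al m la - rhat al m la P Q)
  <= 0 - RD al m la P Q.
Proof.
  intros H HP HPm H1 H2 H3 H4. pose proof (c_cc _ _ _ H). pose proof H as (G1&G2&G3&G4&G5).
  unfold RD. set (R := rhat al m la P Q) in *. set (c := cc al m la) in *.
  set (N := c ^ 2 * (acoef al m la - R) * (R - r1 al m la) + P * R * (R - 1)).
  assert (HN : c ^ 2 * (rp - r1 al m la) * (acoef al m la - R) <= N).
  { unfold N. assert (0 <= P * R * (R - 1)) by (apply Rmult_le_pos; [apply Rmult_le_pos|]; lra).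
    assert (0 <= c^2 * ((acoef al m la - R) * (R - rp))).
    { apply Rmult_le_pos; [apply pow_le; lra|]. apply Rmult_le_pos; lra. }
    assert (E : N - c ^ 2 * (rp - r1 al m la) * (acoef al m la - R) = c^2 * ((acoef al m la - R) * (R - rp)) + P * R * (R - 1)) by (unfold N; ring).
    lra. }
  assert (0 <= c ^ 2 * (rp - r1 al m la) * (acoef al m la - R)).
  { apply Rmult_le_pos; [apply Rmult_le_pos|]; try lra. apply pow_le; lra. }
  replace (0 - (c ^ 2 * (acoef al m la - R) * (r1 al m la - R) + P * R * (1 - R)) / (c + la * P)) with (N / (c + la * P))
    by (unfold N; field; nra).
  replace (c ^ 2 * (rp - r1 al m la) / (c + la * Pmax al m la) * (acoef al m la - R))
    with (c ^ 2 * (rp - r1 al m la) * (acoef al m la - R) / (c + la * Pmax al m la)) by (field; nra).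
  apply Rle_trans with (N / (c + la * Pmax al m la)).
  - unfold Rdiv. apply Rmult_le_compat_r; [left; apply Rinv_0_lt_compat; nra| exact HN].
  - apply div_le_den; nra.
Qed.

Lemma Vbound al m la P Q rp eps eta : Hyps al m la -> 0 <= P -> P <= Pmax al m la -> P <= eta ->
  0 < rhat al m la P Q -> rhat al m la P Q <= rp -> rp < acoef al m la -> 0 < eps ->
  eta = cc al m la ^ 2 * (acoef al m la - rp) * eps / (2 * acoef al m la ^ 2 * (1 + acoef al m la)) ->
  eps < (rhat al m la P Q - r1 al m la) * (rhat al m la P Q - r1 al m la) ->
  2 * (rhat al m la P Q - r1 al m la) * RD al m la P Q <=
    - (cc al m la ^ 2 * (acoef al m la - rp) * eps / (cc al m la + la * Pmax al m la)).
Proof.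
  intros H HP HPm Heta HR HRp Hrpa He Eeta HV.
  pose proof (c_cc _ _ _ H). pose proof (c_apos _ _ _ H). pose proof (c_r1pos _ _ _ H). pose proof (r1_lt_a _ _ _ H).
  pose proof H as (G1&G2&G3&G4&G5).
  unfold RD. set (R := rhat al m la P Q) in *. set (c := cc al m la) in *. set (a := acoef al m la) in *.
  set (r := r1 al m la) in *. set (X := R - r) in *.
  set (B := c ^ 2 * (a - rp) * eps).
  assert (HB : 0 < B) by (unfold B; apply Rmult_lt_0_compat; [apply Rmult_lt_0_compat; [apply pow_lt|]|]; lra).
  set (N := -2 * c^2 * (a - R) * (X * X) + 2 * X * P * R * (1 - R)).
  assert (E : 2 * X * ((c ^ 2 * (a - R) * (r - R) + P * R * (1 - R)) / (c + la * P)) = N / (c + la * P))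
    by (unfold N, X; field; nra).
  rewrite E.
  assert (B1 : (a - rp) * eps <= (a - R) * (X * X)) by (apply Rmult_le_compat; lra).
  assert (B1' : -2 * c^2 * (a - R) * (X * X) <= -2 * B).
  { unfold B. assert (0 < c^2) by (apply pow_lt; lra).
    replace (-2 * c ^ 2 * (a - R) * (X * X)) with (-2 * c^2 * ((a - R) * (X * X))) by ring.
    replace (-2 * (c ^ 2 * (a - rp) * eps)) with (-2 * c^2 * ((a - rp) * eps)) by ring. nra. }
  assert (AX : Rabs X <= a) by (unfold X; apply Rabs_le; lra).
  assert (AY : Rabs (1 - R) <= 1 + a) by (apply Rabs_le; lra).
  assert (B2 : 2 * X * P * R * (1 - R) <= 2 * a * P * a * (1 + a)).
  { eapply Rle_trans; [apply Rle_abs|].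
    rewrite !Rabs_mult. rewrite (Rabs_right 2), (Rabs_right P), (Rabs_right R) by lra.
    pose proof (Rabs_pos X). pose proof (Rabs_pos (1 - R)).
    assert (S2 : 2 * Rabs X * P <= 2 * a * P) by (apply Rmult_le_compat_r; lra).
    assert (S3 : 2 * Rabs X * P * R <= 2 * a * P * a).
    { apply Rmult_le_compat; try lra. apply Rmult_le_pos; [|lra]. apply Rmult_le_pos; lra. }
    apply Rmult_le_compat; try lra. apply Rmult_le_pos; [|lra]. apply Rmult_le_pos; [|lra]. apply Rmult_le_pos; lra. }
  assert (B3 : 2 * a * P * a * (1 + a) <= B).
  { assert (E2 : B = 2 * a * eta * a * (1 + a)) by (rewrite Eeta; unfold B; field; nra).
    rewrite E2. assert (0 <= 2 * a * a * (1 + a)).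
    { apply Rmult_le_pos; [apply Rmult_le_pos; [apply Rmult_le_pos|]|]; lra. }
    replace (2 * a * P * a * (1 + a)) with (2 * a * a * (1 + a) * P) by ring.
    replace (2 * a * eta * a * (1 + a)) with (2 * a * a * (1 + a) * eta) by ring.
    apply Rmult_le_compat_l; lra. }
  assert (HN : N <= - B) by (unfold N; lra).
  assert (Hd : c <= c + la * P) by nra.
  assert (Hd2 : c + la * P <= c + la * Pmax al m la) by nra.
  apply Rle_trans with (- B / (c + la * P)).
  - unfold Rdiv. apply Rmult_le_compat_r; [left; apply Rinv_0_lt_compat; lra|lra].
  - assert (B / (c + la * Pmax al m la) <= B / (c + la * P)) by (apply div_le_den; lra).
    unfold Rdiv in *. lra.
Qed.

Lemma part2 al m la : Hyps al m la -> forall (p q : R -> R),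
  is_global_solution al m la p q -> inT al m la (p 0) (q 0) -> (p 0, q 0) <> (0, 0) ->
  converges_to p q 0 1.
Proof.
  intros H p q [Hic Hder] H0 Hne.
  pose proof (c_cc _ _ _ H) as Hc. pose proof (c_apos _ _ _ H) as Ha. pose proof (c_r1pos _ _ _ H) as Hr1.
  pose proof (r1_lt_a _ _ _ H) as Hr1a. pose proof (rl_facts _ _ _ H) as (L1&L2&L3).
  pose proof (c_rcr1 _ _ _ H) as Hrc1. pose proof (c_rcr2 _ _ _ H) as Hrc2. pose proof (c_rcr3 _ _ _ H) as Hrc3.
  pose proof (c_K _ _ _ H) as HK. pose proof H as (G1&G2&G3&G4&G5).
  assert (HT : forall t, 0 <= t -> inT al m la (p t) (q t)).
  { intros t Ht. apply (part1 al m la H (t + 1) p q); [|exact H0|lra].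
    split.
    - intros eps Heps. destruct (Hic eps Heps) as [d [Hd Hd2]]. exists d. split; auto.
    - intros s Hs. apply Hder. lra. }
  assert (HF : forall t, 0 <= t -> 0 <= p t /\ 0 <= q t /\ r_low al m la <= rhat al m la (p t) (q t) /\
     rhat al m la (p t) (q t) <= acoef al m la /\ p t <= Pmax al m la /\ cc al m la <= cc al m la + la * p t)
    by (intros t Ht; apply Tfacts; auto).
  assert (HPm : 0 <= Pmax al m la) by (destruct (HF 0 ltac:(lra)) as (A1&_&_&_&A2&_); lra).
  assert (Hr : forall t, 0 < t -> derivable_pt_lim (fun s => rhat al m la (p s) (q s)) t (RD al m la (p t) (q t))).
  { intros t Ht. destruct (HF t ltac:(lra)) as (_&_&_&_&_&A). apply der_r; try apply Hder; auto; lra. }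
  (* a time t0 > 0 away from the origin *)
  assert (Ht0 : exists t0, 0 < t0 /\ 0 < acoef al m la - rhat al m la (p t0) (q t0)).
  { assert (Hpq : exists t0, 0 < t0 /\ (p t0 <> 0 \/ q t0 <> 0)).
    { destruct (Req_dec (p 0) 0) as [Ep|Ep].
      - destruct (Req_dec (q 0) 0) as [Eq|Eq]. { exfalso. apply Hne. rewrite Ep, Eq. reflexivity. }
        destruct (Hic (Rabs (q 0))) as [d [Hd Hd2]]. { apply Rabs_pos_lt; auto. }
        exists (d/2). split; [lra|]. right. destruct (Hd2 (d/2)) as [_ B]; [lra|].
        intro E. rewrite E in B. rewrite Rminus_0_l, Rabs_Ropp in B. lra.
      - destruct (Hic (Rabs (p 0))) as [d [Hd Hd2]]. { apply Rabs_pos_lt; auto. }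
        exists (d/2). split; [lra|]. left. destruct (Hd2 (d/2)) as [B _]; [lra|].
        intro E. rewrite E in B. rewrite Rminus_0_l, Rabs_Ropp in B. lra. }
    destruct Hpq as [t0 [Ht0 Hor]]. exists t0. split; auto.
    destruct (HF t0 ltac:(lra)) as (A1&A2&A3&A4&A5&A6).
    pose proof (q_id al m la (p t0) (q t0) ltac:(lra)) as E.
    destruct (Rle_lt_or_eq_dec _ _ A4) as [Hl|Heq]; [lra|]. exfalso.
    rewrite Heq in E.
    assert (0 <= la * p t0 * acoef al m la) by (apply Rmult_le_pos; [apply Rmult_le_pos|]; lra).
    assert (Eq0 : q t0 = 0 /\ la * p t0 * acoef al m la = 0) by (split; nra).
    destruct Eq0 as [Eq0 Ep0]. destruct Hor as [Hor|Hor]; [|contradiction].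
    apply Hor. apply Rmult_integral in Ep0. destruct Ep0 as [Ep0|Ep0]; [|lra].
    apply Rmult_integral in Ep0. destruct Ep0; lra. }
  destruct Ht0 as [t0 [Ht0 Ha0]].
  set (rp := (Rmax 1 (r1 al m la) + rcr al m la) / 2).
  assert (Hrp : 1 < rp /\ r1 al m la < rp /\ rp < rcr al m la).
  { pose proof (Rmax_l 1 (r1 al m la)). pose proof (Rmax_r 1 (r1 al m la)).
    assert (Rmax 1 (r1 al m la) < rcr al m la) by (apply Rmax_lub_lt; lra). unfold rp. lra. }
  clearbody rp.
  assert (Ph1 : exists T1, 0 < T1 /\ forall t, T1 <= t -> rhat al m la (p t) (q t) <= rp).
  { destruct (classic (exists s, t0 <= s /\ rhat al m la (p s) (q s) <= rp)) as [[s [Hs1 Hs2]]|Hno].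
    - exists s. split; [lra|].
      apply (Stay (fun s => rhat al m la (p s) (q s)) (fun t => RD al m la (p t) (q t)) rp s); auto; try lra.
      intros t Ht Hlt. destruct (HF t ltac:(lra)) as (A1&A2&A3&A4&A5&A6).
      apply RD_nonpos; auto; lra.
    - exfalso.
      assert (Hall : forall s, t0 <= s -> rp < rhat al m la (p s) (q s)).
      { intros s Hs. destruct (Rle_or_lt (rhat al m la (p s) (q s)) rp) as [Hl|Hl]; [|exact Hl].
        exfalso; apply Hno; eauto. }
      set (kap := cc al m la ^ 2 * (rp - r1 al m la) / (cc al m la + la * Pmax al m la)).
      assert (Hkap : 0 < kap).
      { unfold kap. apply Rdiv_lt_0_compat; [|nra]. apply Rmult_lt_0_compat; [apply pow_lt|]; lra. }
      set (h0 := acoef al m la - rhat al m la (p t0) (q t0)).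
      set (y := t0 + acoef al m la / (h0 * kap)).
      assert (Hy : t0 < y).
      { unfold y. assert (0 < h0 * kap) by (apply Rmult_lt_0_compat; [exact Ha0|exact Hkap]).
        assert (0 < acoef al m la / (h0 * kap)) by (apply Rdiv_lt_0_compat; assumption). lra. }
      assert (Hdh : forall t, 0 < t -> derivable_pt_lim (fun s => acoef al m la - rhat al m la (p s) (q s)) t
                       (0 - RD al m la (p t) (q t))) by (intros; apply dminus; [apply dconst|apply Hr; auto]).
      pose proof (L5 (fun s => acoef al m la - rhat al m la (p s) (q s)) (fun t => 0 - RD al m la (p t) (q t)) kap t0 y Hy) as HL.
      assert (HL2 : h0 * exp (kap * (y - t0)) <= acoef al m la - rhat al m la (p y) (q y)).
      { apply HL.
        - eapply RC_of_der. apply Hdh. lra.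
        - intros t Ht. apply Hdh. lra.
        - intros t Ht. destruct (HF t ltac:(lra)) as (A1&A2&A3&A4&A5&A6).
          unfold kap. apply RD_upper; auto; try lra. left; apply Hall; lra. }
      pose proof (exp_ineq1_le (kap * (y - t0))) as Hexp.
      assert (E : kap * (y - t0) = acoef al m la / h0).
      { unfold y. field. split; apply Rgt_not_eq; assumption. }
      rewrite E in Hexp, HL2.
      assert (h0 * (1 + acoef al m la / h0) = h0 + acoef al m la) by (field; apply Rgt_not_eq; assumption).
      assert (h0 * (1 + acoef al m la / h0) <= h0 * exp (acoef al m la / h0)) by (apply Rmult_le_compat_l; [left; exact Ha0|exact Hexp]).
      assert (Hy0 : 0 <= y) by (left; apply Rlt_trans with t0; assumption).
      destruct (HF y Hy0) as (A1&A2&A3&A4&A5&A6). fold h0 in Ha0. clearbody y kap h0. lra. }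
  destruct Ph1 as [T1 [HT1 HT1r]].
  set (mu := Kc al m la * (rcr al m la - rp)).
  assert (Hmu : 0 < mu) by (unfold mu; apply Rmult_lt_0_compat; lra).
  assert (Emu : mu = Kc al m la * (rcr al m la - rp)) by reflexivity.
  clearbody mu.
  assert (Ph2 : forall t, T1 <= t -> p t * exp (mu * (t - T1)) <= Pmax al m la).
  { intros t Ht. destruct (Req_dec t T1) as [->|Hne1].
    { replace (mu * (T1 - T1)) with 0 by ring. rewrite exp_0, Rmult_1_r. apply (HF T1); lra. }
    assert (Hlt : T1 < t) by lra.
    assert (Hdm : forall s, 0 < s -> derivable_pt_lim (fun z => - p z) s (- fp al m la (p s) (q s)))
      by (intros; apply (derivable_pt_lim_opp p); apply Hder; auto).
    pose proof (L5 (fun z => - p z) (fun s => - fp al m la (p s) (q s)) (- mu) T1 t Hlt) as HL.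
    assert (HL2 : - p T1 * exp (- mu * (t - T1)) <= - p t).
    { apply HL.
      - eapply RC_of_der. apply Hdm. lra.
      - intros s Hs. apply Hdm. lra.
      - intros s Hs. destruct (HF s ltac:(lra)) as (A1&A2&A3&A4&A5&A6).
        rewrite fp_id by (auto; lra). assert (rhat al m la (p s) (q s) <= rp) by (apply HT1r; lra).
        assert (0 <= p s * Kc al m la * (rp - rhat al m la (p s) (q s))).
        { apply Rmult_le_pos; [apply Rmult_le_pos|]; lra. }
        assert (E : - mu * - p s - - (p s * Kc al m la * (rhat al m la (p s) (q s) - rcr al m la))
           = - (p s * Kc al m la * (rp - rhat al m la (p s) (q s)))) by (rewrite Emu; ring).
        lra. }
    assert (E1 : exp (- mu * (t - T1)) * exp (mu * (t - T1)) = 1).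
    { rewrite <- exp_plus. replace (- mu * (t - T1) + mu * (t - T1)) with 0 by ring. apply exp_0. }
    assert (0 < exp (mu * (t - T1))) by apply exp_pos.
    destruct (HF T1 ltac:(lra)) as (A1&A2&A3&A4&A5&A6).
    assert (p t <= p T1 * exp (- mu * (t - T1))) by lra.
    apply Rle_trans with (p T1 * exp (- mu * (t - T1)) * exp (mu * (t - T1))).
    - apply Rmult_le_compat_r; lra.
    - rewrite Rmult_assoc, E1. lra. }
  assert (Pto0 : forall eta, 0 < eta -> exists T2, T1 <= T2 /\ forall t, T2 <= t -> p t <= eta).
  { intros eta Heta. exists (T1 + Pmax al m la / (mu * eta)).
    assert (Hq0 : 0 <= Pmax al m la / (mu * eta)).
    { unfold Rdiv. apply Rmult_le_pos; [lra|]. left. apply Rinv_0_lt_compat. apply Rmult_lt_0_compat; lra. }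
    split; [lra|]. intros t Ht.
    pose proof (Ph2 t ltac:(lra)) as Hb. pose proof (exp_ineq1_le (mu * (t - T1))) as Hex.
    assert (E : mu * (Pmax al m la / (mu * eta)) = Pmax al m la / eta) by (field; split; apply Rgt_not_eq; assumption).
    assert (Hm : Pmax al m la / eta <= mu * (t - T1)).
    { rewrite <- E. apply Rmult_le_compat_l; lra. }
    destruct (HF t ltac:(lra)) as (A1&_).
    assert (Hc1 : p t * (1 + Pmax al m la / eta) <= Pmax al m la).
    { apply Rle_trans with (p t * exp (mu * (t - T1))); [apply Rmult_le_compat_l; lra|exact Hb]. }
    destruct (Rle_or_lt (p t) eta) as [Hl|Hl]; [exact Hl|]. exfalso.
    assert (E2 : eta * (Pmax al m la / eta) = Pmax al m la) by (field; apply Rgt_not_eq; assumption).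
    assert (0 <= Pmax al m la / eta) by (unfold Rdiv; apply Rmult_le_pos; [lra|left; apply Rinv_0_lt_compat; lra]).
    assert (eta * (Pmax al m la / eta) <= p t * (Pmax al m la / eta)) by (apply Rmult_le_compat_r; lra).
    nra. }
  assert (Ph3 : forall eps, 0 < eps -> exists T3, 0 < T3 /\ forall t, T3 <= t ->
     (rhat al m la (p t) (q t) - r1 al m la) * (rhat al m la (p t) (q t) - r1 al m la) <= eps).
  { intros eps Heps.
    set (eta := cc al m la ^ 2 * (acoef al m la - rp) * eps / (2 * acoef al m la ^ 2 * (1 + acoef al m la))).
    assert (Heta : 0 < eta).
    { unfold eta. apply Rdiv_lt_0_compat.
      - apply Rmult_lt_0_compat; [apply Rmult_lt_0_compat; [apply pow_lt|]|]; lra.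
      - apply Rmult_lt_0_compat; [apply Rmult_lt_0_compat; [|apply pow_lt]|]; lra. }
    assert (Eeta : eta = cc al m la ^ 2 * (acoef al m la - rp) * eps / (2 * acoef al m la ^ 2 * (1 + acoef al m la))) by reflexivity.
    clearbody eta.
    destruct (Pto0 eta Heta) as [T2 [HT2 HT2p]].
    apply (Reach (fun t => (rhat al m la (p t) (q t) - r1 al m la) * (rhat al m la (p t) (q t) - r1 al m la))
                 (fun t => 2 * (rhat al m la (p t) (q t) - r1 al m la) * RD al m la (p t) (q t))
                 eps (cc al m la ^ 2 * (acoef al m la - rp) * eps / (cc al m la + la * Pmax al m la)) T2).
    - lra.
    - apply Rdiv_lt_0_compat; [|nra]. apply Rmult_lt_0_compat; [apply Rmult_lt_0_compat; [apply pow_lt|]|]; lra.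
    - intros t Ht. eapply dext.
      + apply (dmult (fun s => rhat al m la (p s) (q s) - r1 al m la) (fun s => rhat al m la (p s) (q s) - r1 al m la));
          (apply dminus; [apply Hr; exact Ht|apply dconst]).
      + ring.
    - intros t Ht. apply Rle_0_sqr.
    - intros t Ht Hlt. destruct (HF t ltac:(lra)) as (A1&A2&A3&A4&A5&A6).
      apply (Vbound al m la (p t) (q t) rp eps eta H A1 A5 (HT2p t ltac:(lra)) ltac:(lra)
        (HT1r t ltac:(lra)) ltac:(lra) Heps Eeta Hlt). }
  intros eps Heps.
  set (z := eps / (4 * cc al m la)).
  assert (Hz : 0 < z) by (unfold z; apply Rdiv_lt_0_compat; lra).
  assert (Ez : cc al m la * z = eps / 4) by (unfold z; field; apply Rgt_not_eq; assumption).
  clearbody z.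
  destruct (Ph3 (z * z) ltac:(nra)) as [T3 [HT3 HT3v]].
  set (et := Rmin (eps / 2) (eps / (4 * la * acoef al m la))).
  assert (Het1 : et <= eps / 2) by apply Rmin_l.
  assert (Het2 : et <= eps / (4 * la * acoef al m la)) by apply Rmin_r.
  assert (Het : 0 < et).
  { apply Rmin_pos; [lra|]. apply Rdiv_lt_0_compat; [lra|]. apply Rmult_lt_0_compat; lra. }
  assert (Eet : la * (eps / (4 * la * acoef al m la)) * acoef al m la = eps / 4)
    by (field; split; apply Rgt_not_eq; assumption).
  clearbody et.
  destruct (Pto0 et Het) as [T4 [HT4 HT4p]].
  exists (Rmax T3 T4). intros t Ht.
  pose proof (Rmax_l T3 T4). pose proof (Rmax_r T3 T4).
  destruct (HF t ltac:(lra)) as (A1&A2&A3&A4&A5&A6).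
  assert (Hpt : p t <= et) by (apply HT4p; lra).
  split.
  - rewrite Rminus_0_r, Rabs_right by lra. lra.
  - assert (Hv := HT3v t ltac:(lra)).
    assert (Habs : Rabs (rhat al m la (p t) (q t) - r1 al m la) <= z).
    { rewrite <- (Rabs_right z) by lra. apply Rsqr_le_abs_0. unfold Rsqr. exact Hv. }
    pose proof (q_id al m la (p t) (q t) ltac:(lra)) as Eq.
    assert (Ec : cc al m la * r1 al m la = cc al m la * acoef al m la - 1)
      by (rewrite (c_r1 _ _ _ H); field; apply Rgt_not_eq; assumption).
    assert (Eq1 : q t - 1 = cc al m la * (r1 al m la - rhat al m la (p t) (q t)) - la * p t * rhat al m la (p t) (q t))
      by (rewrite Eq at 1; lra).
    rewrite Eq1.
    assert (B1 : Rabs (cc al m la * (r1 al m la - rhat al m la (p t) (q t))) <= eps / 4).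
    { rewrite Rabs_mult, Rabs_right by lra. rewrite <- Ez. rewrite <- Rabs_Ropp.
      replace (- (r1 al m la - rhat al m la (p t) (q t))) with (rhat al m la (p t) (q t) - r1 al m la) by ring.
      apply Rmult_le_compat_l; lra. }
    assert (B2 : 0 <= la * p t * rhat al m la (p t) (q t) <= eps / 4).
    { split. apply Rmult_le_pos; [apply Rmult_le_pos|]; lra.
      rewrite <- Eet. apply Rmult_le_compat.
      - apply Rmult_le_pos; lra.
      - lra.
      - apply Rmult_le_compat_l; lra.
      - lra. }
    apply Rle_lt_trans with (Rabs (cc al m la * (r1 al m la - rhat al m la (p t) (q t))) + Rabs (la * p t * rhat al m la (p t) (q t))).
    + unfold Rminus at 1. rewrite <- (Rabs_Ropp (la * p t * rhat al m la (p t) (q t))). apply Rabs_triang.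
    + rewrite (Rabs_right (la * p t * rhat al m la (p t) (q t))) by lra. lra.
Qed.

Theorem lemma7p1 (alpha m lambda : R) :
  0 < alpha -> -1 < m -> m < alpha ->
  0 < lambda -> lambda < 2 * (alpha - m) / (1 + m) ->
  (* positive invariance of T *)
  (forall (tau : R) (p q : R -> R),
     is_solution_on alpha m lambda tau p q ->
     inT alpha m lambda (p 0) (q 0) ->
     forall t, 0 <= t < tau -> inT alpha m lambda (p t) (q t)) /\
  (* convergence to (0,1) of trajectories starting in T \ {(0,0)} *)
  (forall (p q : R -> R),
     is_global_solution alpha m lambda p q ->
     inT alpha m lambda (p 0) (q 0) ->
     (p 0, q 0) <> (0, 0) ->
     converges_to p q 0 1).
Proof.
  intros H1 H2 H3 H4 H5.
  assert (H : Hyps alpha m lambda) by (repeat split; assumption).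
  split; [exact (part1 alpha m lambda H) | exact (part2 alpha m lambda H)].
Qed.
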